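(* Let $\mathfrak v_8$ be a $C(8)$-module and $\mathfrak v_r$ a $C(r)$-module, and let $\mathfrak v_8\otimes\mathfrak v_r$ carry the $C(8+r)$-module structure $J_{(z,w)}=J_z\otimes\mathrm{Id}+K_8\otimes J_w$. If $\mathcal L_r\in{\rm Lag}(\mathfrak v_r)$ and $\mathcal L_8\in{\rm Lag}(\mathfrak v_8)$, then $$\mathcal L_8\otimes\mathcal L_r+\mathcal L_8^\perp\otimes\mathcal L_r^\perp\ \in\ {\rm Lag}(\mathfrak v_8\otimes\mathfrak v_r).$$
   Context: $C(k)$ is the real Clifford algebra of $\mathbb R^k$ with relations $z^2=-\langle z,z\rangle 1$; a $C(k)$-module $\mathfrak w$ has an inner product making each $J_z$ skew-symmetric, and defines the Lie algebra of Heisenberg type $\mathfrak w\oplus\mathbb R^k$ with $\mathbb R^k$ central and $\langle z,[u,v]\rangle=\langle J_zu,v\rangle$. $K_8=J_{z_1}\cdots J_{z_8}$ for an orthonormal basis of $\mathbb R^8$. ${\rm Lag}(\mathfrak w)$ is the set of subspaces $\mathcal L\subset\mathfrak w$ with $[\mathcal L,\mathcal L]=0$ and $\dim\mathcal L=\frac12\dim\mathfrak w$; $\perp$ denotes orthogonal complement; $\mathfrak v_8\otimes\mathfrak v_r$ has the tensor product inner product. *)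

(* Defs.v *)
From HB Require Import structures.
From mathcomp Require Import all_boot all_order all_algebra.
From mathcomp Require Import all_reals.
From mathcomp.real_closed Require Export mxtens.
Set Implicit Arguments. Unset Strict Implicit. Unset Printing Implicit Defensive.
Import Order.TTheory GRing.Theory Num.Theory.
Local Open Scope ring_scope.

(* Vectors of a module w of dimension n are row vectors 'rV[R]_n, with the
   standard inner product <u,v> = u v^T; an endomorphism M acts by u |-> u *m M.
   Subspaces are represented by (the row spaces of) square matrices. *)

Definition ip (R : realType) n (u v : 'rV[R]_n) : R := (u *m v^T) 0 0.

Definition Jz (R : realType) k n (J : 'I_k -> 'M[R]_n) (z : 'rV[R]_k) : 'M[R]_n :=
  \sum_(i < k) z 0 i *: J i.

Definition clifford_module (R : realType) k n (J : 'I_k -> 'M[R]_n) : Prop :=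
  (forall z : 'rV[R]_k, Jz J z *m Jz J z = - (ip z z) *: 1%:M) /\
  (forall z : 'rV[R]_k, (Jz J z)^T = - Jz J z).

(* Lie bracket of the H-type algebra w + R^k: <z,[u,v]> = <J_z u, v>,
   so [u,v]_i = <J_{e_i} u, v>. *)
Definition hbracket (R : realType) k n (J : 'I_k -> 'M[R]_n) (u v : 'rV[R]_n)
  : 'rV[R]_k := \row_i ip (u *m J i) v.

Definition Lag (R : realType) k n (J : 'I_k -> 'M[R]_n) (L : 'M[R]_n) : Prop :=
  (forall u v : 'rV[R]_n, (u <= L)%MS -> (v <= L)%MS -> hbracket J u v = 0) /\
  (\rank L).*2 = n.

Definition perp (R : realType) n (L : 'M[R]_n) : 'M[R]_n := kermx L^T.

(* K_8 = J_{o_1} ... J_{o_8} for the orthonormal basis given by the rows of O *)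
Definition K8 (R : realType) n (J : 'I_8 -> 'M[R]_n) (O : 'M[R]_8) : 'M[R]_n :=
  \big[mulmx/1%:M]_(i < 8) Jz J (row i O).

(* C(8+r)-structure on v8 (x) vr: J_{(z,w)} = J_z (x) Id + K8 (x) J_w,
   given on the standard basis of R^(8+r) = R^8 + R^r. *)
Definition Jtens (R : realType) r n8 nr (J8 : 'I_8 -> 'M[R]_n8)
  (O : 'M[R]_8) (Jr : 'I_r -> 'M[R]_nr) (i : 'I_(8 + r)) : 'M[R]_(n8 * nr) :=
  match split i with
  | inl a => J8 a *t (1%:M : 'M[R]_nr)
  | inr b => K8 J8 O *t Jr b
  end.

(* Main.v *)
Require Import Defs.
From HB Require Import structures.
From mathcomp Require Import all_boot all_order all_algebra.
From mathcomp Require Import all_reals.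
From mathcomp.real_closed Require Import mxtens.
From mathcomp Require Import zify.
Set Implicit Arguments. Unset Strict Implicit. Unset Printing Implicit Defensive.
Import GRing.Theory Num.Theory.
Local Open Scope ring_scope.

Section Aux.
Variable R : realType.

Lemma tens11 m n : (1%:M : 'M[R]_m) *t (1%:M : 'M[R]_n) = 1%:M.
Proof.
apply/matrixP => i j; case: (mxtens_indexP i) => i0 i1; case: (mxtens_indexP j)=> j0 j1.
rewrite tensmxE !mxE -natrM mulnb; congr (_%:R).
by rewrite (can_eq (@mxtens_indexK _ _)) xpair_eqE.
Qed.

Lemma tens_submx m1 m2 n1 m3 m4 n2 (A : 'M[R]_(m1, n1)) (C : 'M[R]_(m2, n1))
  (B : 'M[R]_(m3, n2)) (D : 'M[R]_(m4, n2)) :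
  (A <= C)%MS -> (B <= D)%MS -> (A *t B <= C *t D)%MS.
Proof.
move=> /submxP [X ->] /submxP [Y ->].
by rewrite -tensmx_mul submxMl.
Qed.

Lemma rank_tens m1 n1 m2 n2 (A : 'M[R]_(m1, n1)) (B : 'M[R]_(m2, n2)) :
  \rank (A *t B) = (\rank A * \rank B)%N.
Proof.
have e : (A *t B == row_base A *t row_base B)%MS.
  by apply/andP; split; apply: tens_submx; rewrite ?eq_row_base.
rewrite (eqmx_rank e).
have : row_free (row_base A *t row_base B).
  have /row_freeP [X HX] := row_base_free A.
  have /row_freeP [Y HY] := row_base_free B.
  by apply/row_freeP; exists (X *t Y); rewrite tensmx_mul HX HY tens11.
by move/eqnP.
Qed.

Lemma ip_mx n (u : 'rV[R]_n) : ip u u = 0 -> u = 0.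
Proof.
rewrite /ip mxE => /psumr_eq0P H.
apply/rowP => j; rewrite mxE.
have : u 0 j * u^T j 0 = 0.
  by apply: H => // i _; rewrite !mxE -expr2 sqr_ge0.
by rewrite !mxE => /eqP; rewrite mulf_eq0 orbb => /eqP.
Qed.

Lemma ip_zero n m1 m2 (A : 'M[R]_(m1, n)) (B : 'M[R]_(m2, n)) (M : 'M[R]_n) u v :
  (u <= A)%MS -> (v <= B)%MS -> A *m M *m B^T = 0 -> ip (u *m M) v = 0.
Proof.
move=> /submxP [x ->] /submxP [y ->] H.
by rewrite /ip trmx_mul !mulmxA -(mulmxA x) -(mulmxA x) H mulmx0 mul0mx mxE.
Qed.

Lemma ip_addl n (u1 u2 v : 'rV[R]_n) M :
  ip ((u1 + u2) *m M) v = ip (u1 *m M) v + ip (u2 *m M) v.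
Proof. by rewrite /ip mulmxDl mulmxDl mxE. Qed.

Lemma ip_addr n (u v1 v2 : 'rV[R]_n) :
  ip u (v1 + v2) = ip u v1 + ip u v2.
Proof. by rewrite /ip linearD /= mulmxDr mxE. Qed.

Lemma perpL n (L : 'M[R]_n) : perp L *m L^T = 0.
Proof. exact: mulmx_ker. Qed.

Lemma Lperp n (L : 'M[R]_n) : L *m (perp L)^T = 0.
Proof. by rewrite -[L]trmxK -trmx_mul trmxK perpL trmx0. Qed.

Lemma rank_perp n (L : 'M[R]_n) : \rank (perp L) = (n - \rank L)%N.
Proof. by rewrite /perp mxrank_ker mxrank_tr. Qed.

Lemma lag_mx k n (J : 'I_k -> 'M[R]_n) (L : 'M[R]_n) :
  (forall u v : 'rV[R]_n, (u <= L)%MS -> (v <= L)%MS -> hbracket J u v = 0) ->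
  forall i, L *m J i *m L^T = 0.
Proof.
move=> H i; apply/matrixP => p q.
have := H (row p L) (row q L) (row_sub _ _) (row_sub _ _).
move/rowP/(_ i); rewrite !mxE /ip => Hpq.
apply: (etrans _ Hpq); rewrite !mxE; apply: eq_bigr => j _; rewrite -row_mul !mxE.
by [].
Qed.

Lemma Jz_L k n (J : 'I_k -> 'M[R]_n) (L : 'M[R]_n) z :
  (forall i, L *m J i *m L^T = 0) -> L *m Jz J z *m L^T = 0.
Proof.
move=> H; rewrite /Jz mulmx_sumr mulmx_suml big1 // => i _.
by rewrite -scalemxAr -scalemxAl H scaler0.
Qed.

Lemma sub_orth m1 m2 m3 n (X : 'M[R]_(m1, n)) (Z : 'M[R]_(m2, n)) (Y : 'M[R]_(m3, n)) M :
  (X *m M <= Z)%MS -> Z *m Y^T = 0 -> X *m M *m Y^T = 0.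
Proof. by move=> /submxP [D ->] H; rewrite -mulmxA H mulmx0. Qed.

Lemma swap n (L M : 'M[R]_n) c :
  M *m M = - c *: 1%:M -> c != 0 -> L *m M *m L^T = 0 -> (\rank L).*2 = n ->
  (L *m M <= perp L)%MS /\ (perp L *m M <= L)%MS.
Proof.
move=> HM c0 HL Hr.
have s1 : (L *m M <= perp L)%MS by apply/sub_kermxP.
split => //.
have uM : M \in unitmx.
  have : M *m (- c^-1 *: M) = 1%:M.
    by rewrite -scalemxAr HM scalerA mulrNN mulVf // scale1r.
  by case/mulmx1_unit.
have e : (L *m M == perp L)%MS.
  have [_ <-] := mxrank_leqif_eq s1.
  rewrite mxrankMfree ?row_free_unit // rank_perp; apply/eqP; move: Hr; rewrite -addnn; lia.
case/andP: e => _ e2.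
apply: submx_trans (submxMr M e2) _.
by rewrite -mulmxA HM -scalemxAr mulmx1 scalemx_sub.
Qed.

Lemma Jz_delta k n (J : 'I_k -> 'M[R]_n) a : Jz J (delta_mx 0 a) = J a.
Proof.
rewrite /Jz (bigD1 a) //= big1 => [|j ja]; first by rewrite !mxE !eqxx scale1r addr0.
by rewrite !mxE (negbTE ja) andbF scale0r.
Qed.

Lemma ip_delta k (a : 'I_k) : ip (delta_mx 0 a : 'rV[R]_k) (delta_mx 0 a) = 1.
Proof. by rewrite /ip trmx_delta mul_delta_mx mxE !eqxx. Qed.

Lemma ip_rowO (O : 'M[R]_8) i : O *m O^T = 1%:M -> ip (row i O) (row i O) = 1.
Proof.
move/matrixP/(_ i i); rewrite !mxE eqxx => H; apply: etrans H; rewrite /ip !mxE; by apply: eq_bigr => j _; rewrite !mxE.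
Qed.

Lemma swapJ k n (J : 'I_k -> 'M[R]_n) L z :
  clifford_module J -> Lag J L -> ip z z != 0 ->
  (L *m Jz J z <= perp L)%MS /\ (perp L *m Jz J z <= L)%MS.
Proof.
move=> [H1 _] [HL Hr] z0; apply: (swap (H1 z) z0 _ Hr).
exact: Jz_L (lag_mx HL).
Qed.

Lemma K8_stab n (J : 'I_8 -> 'M[R]_n) (O : 'M[R]_8) L :
  clifford_module J -> Lag J L -> O *m O^T = 1%:M ->
  (L *m K8 J O <= L)%MS /\ (perp L *m K8 J O <= perp L)%MS.
Proof.
move=> HC HL HO.
pose A (M : 'M[R]_n) := (L *m M <= perp L)%MS /\ (perp L *m M <= L)%MS.
pose S (M : 'M[R]_n) := (L *m M <= L)%MS /\ (perp L *m M <= perp L)%MS.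
have HA i : A (Jz J (row i O)).
  by apply: swapJ => //; rewrite ip_rowO // oner_neq0.
have AA X Y : A X -> A Y -> S (X *m Y).
  move=> [X1 X2] [Y1 Y2]; rewrite /S !mulmxA; split.
    exact: submx_trans (submxMr Y X1) Y2.
  exact: submx_trans (submxMr Y X2) Y1.
have AS X Y : A X -> S Y -> A (X *m Y).
  move=> [X1 X2] [Y1 Y2]; rewrite /A !mulmxA; split.
    exact: submx_trans (submxMr Y X1) Y2.
  exact: submx_trans (submxMr Y X2) Y1.
rewrite /K8 !big_ord_recl big_ord0 mulmx1.
apply: (AA) => //; apply: (AS) => //; apply: (AA) => //; apply: (AS) => //.
apply: (AA) => //; apply: (AS) => //; apply: (AA) => //.
Qed.

Lemma cap0 m1 m2 n (A : 'M[R]_(m1, n)) (B : 'M[R]_(m2, n)) :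
  A *m B^T = 0 -> \rank (A :&: B)%MS = 0%N.
Proof.
move=> H; apply/eqP; rewrite mxrank_eq0; apply/eqP/row_matrixP => i.
rewrite row0; apply: ip_mx; rewrite -[X in ip X]mulmx1.
apply: (ip_zero (A := A) (B := B)); last by rewrite mulmx1.
  exact: submx_trans (row_sub i _) (capmxSl A B).
exact: submx_trans (row_sub i _) (capmxSr A B).
Qed.

Lemma tens3 m1 m2 n1 n2 m3 m4 (X8 : 'M[R]_(m1, n1)) (Xr : 'M[R]_(m2, n2))
  (M8 : 'M[R]_n1) (Mr : 'M[R]_n2) (Y8 : 'M[R]_(m3, n1)) (Yr : 'M[R]_(m4, n2)) :
  (X8 *t Xr) *m (M8 *t Mr) *m (Y8 *t Yr)^T = (X8 *m M8 *m Y8^T) *t (Xr *m Mr *m Yr^T).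
Proof. by rewrite trmx_tens !tensmx_mul. Qed.

End Aux.

Theorem theorem4p5 (R : realType) (r n8 nr : nat)
  (J8 : 'I_8 -> 'M[R]_n8) (Jr : 'I_r -> 'M[R]_nr) (O : 'M[R]_8)
  (L8 : 'M[R]_n8) (Lr : 'M[R]_nr) :
  clifford_module J8 -> clifford_module Jr ->
  O *m O^T = 1%:M ->
  Lag J8 L8 -> Lag Jr Lr ->
  Lag (Jtens J8 O Jr) (L8 *t Lr + perp L8 *t perp Lr)%MS.
Proof.
move=> C8 Cr HO H8 Hr.
have K := K8_stab C8 H8 HO.
have [HL8 Hr8] := H8; have [HLr Hrr] := Hr.
have L8J := lag_mx HL8; have LrJ := lag_mx HLr.
have S8 a : (perp L8 *m J8 a <= L8)%MS.
  have := (swapJ (z := delta_mx 0 a) C8 H8); rewrite Jz_delta ip_delta oner_neq0.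
  by case.
have Sr b : (perp Lr *m Jr b <= Lr)%MS.
  have := (swapJ (z := delta_mx 0 b) Cr Hr); rewrite Jz_delta ip_delta oner_neq0.
  by case.
have Q : forall i,
  [/\ (L8 *t Lr) *m Jtens J8 O Jr i *m (L8 *t Lr)^T = 0,
      (L8 *t Lr) *m Jtens J8 O Jr i *m (perp L8 *t perp Lr)^T = 0,
      (perp L8 *t perp Lr) *m Jtens J8 O Jr i *m (L8 *t Lr)^T = 0 &
      (perp L8 *t perp Lr) *m Jtens J8 O Jr i *m (perp L8 *t perp Lr)^T = 0].
  move=> i; rewrite /Jtens; case: (split i) => [a|b]; rewrite !tens3 ?mulmx1.
    rewrite L8J tens0mx Lperp perpL !tensmx0; split => //.
    by rewrite (sub_orth (S8 a) (Lperp L8)) tens0mx.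
  rewrite LrJ tensmx0 (sub_orth K.1 (Lperp L8)) (sub_orth K.2 (perpL L8)) !tens0mx.
  by rewrite (sub_orth (Sr b) (Lperp Lr)) tensmx0.
split.
  move=> u v /sub_addsmxP [[x1 x2] ->] /sub_addsmxP [[y1 y2] ->] /=.
  apply/rowP => i; rewrite !mxE ip_addl !ip_addr.
  have [Q1 Q2 Q3 Q4] := Q i.
  by rewrite !(ip_zero (submxMl _ _) (submxMl _ _)) ?addr0.
have := mxrank_sum_cap (L8 *t Lr) (perp L8 *t perp Lr).
rewrite cap0; last by rewrite trmx_tens tensmx_mul Lperp tens0mx.
rewrite addn0 => ->; rewrite !rank_tens !rank_perp.
move: Hr8 Hrr; move: (\rank L8) (\rank Lr) => a b <- <-.
rewrite -!addnn; nia.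
Qed.
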